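(* For every closed $\varphi\in\mathrm{sHML}_F$, the monitor $\mathrm{m}(\varphi)$ is sound and violation-complete for $\varphi$ over finfinite traces. For every closed $\varphi\in\mathrm{cHML}_F$, $\mathrm{m}(\varphi)$ is sound and satisfaction-complete for $\varphi$ over finfinite traces.
   Context: Fix a finite set $\mathrm{Act}$ of actions, $\tau\notin\mathrm{Act}$. recHML formulae: $\varphi::=\mathrm{tt}\mid\mathrm{ff}\mid\varphi\vee\varphi\mid\varphi\wedge\varphi\mid\langle A\rangle\varphi\mid[A]\varphi\mid\min X.\varphi\mid\max X.\varphi\mid X$ ($A\subseteq\mathrm{Act}$), guarded. Fragments: $\mathrm{sHML}_F$: $\varphi::=\mathrm{tt}\mid\mathrm{ff}\mid[A]\varphi\mid\varphi\vee\varphi\mid\varphi\wedge\varphi\mid\max X.\varphi\mid X$; $\mathrm{cHML}_F$: $\varphi::=\mathrm{tt}\mid\mathrm{ff}\mid\langle A\rangle\varphi\mid\varphi\vee\varphi\mid\varphi\wedge\varphi\mid\min X.\varphi\mid X$. Finfinite traces $\mathrm{Fin}=\mathrm{Act}^\omega\cup\mathrm{Act}^*$; finfinite semantics: $[\![\mathrm{tt}]\!]_F=\mathrm{Fin}$, $[\![\mathrm{ff}]\!]_F=\emptyset$, $\vee,\wedge$ union/intersection, $[\![\langle A\rangle\varphi,\sigma]\!]_F=\{ag\mid a\in A,g\in[\![\varphi,\sigma]\!]_F\}$, $[\![[A]\varphi,\sigma]\!]_F=\{g\mid\forall a\in A,\forall g'.\ g=ag'\Rightarrow g'\in[\![\varphi,\sigma]\!]_F\}$,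 $\min/\max$ as least/greatest fixpoints (intersection of pre-fixpoints / union of post-fixpoints), $[\![X,\sigma]\!]_F=\sigma(X)$. Monitors: $m,n::=v\mid a.m\mid m+n\mid\mathrm{rec}\,x.m\mid x\mid m\otimes n\mid m\oplus n$, verdicts $v::=\mathrm{end}\mid\mathrm{no}\mid\mathrm{yes}$, with transitions ($\mu\in\mathrm{Act}\cup\{\tau\}$, $a\in\mathrm{Act}$, $\odot\in\{\otimes,\oplus\}$): $a.m\xrightarrow{a}m$; $\mathrm{rec}\,x.m\xrightarrow{\tau}m[\mathrm{rec}\,x.m/x]$; if $m\xrightarrow{\mu}m'$ then $m+n\xrightarrow{\mu}m'$ and $n+m\xrightarrow{\mu}m'$; $v\xrightarrow{a}v$; if $m\xrightarrow{a}m'$ and $n\xrightarrow{a}n'$ then $m\odot n\xrightarrow{a}m'\odot n'$; if $m\xrightarrow{\tau}m'$ then $m\odot n\xrightarrow{\tau}m'\odot n$ and $n\odot m\xrightarrow{\tau}n\odot m'$; $\mathrm{end}\odot\mathrm{end}\xrightarrow{\tau}\mathrm{end}$; $\mathrm{yes}\otimes m\xrightarrow{\tau}m$, $\mathrm{no}\otimes m\xrightarrow{\tau}\mathrm{no}$, $\mathrm{no}\oplus m\xrightarrow{\tau}m$, $\mathrm{yes}\oplus m\xrightarrow{\tau}\mathrm{yes}$ and their symmetric versions. Weak transitions $\Rightarrow,\overset{a}{\Longrightarrow},\overset{s}{\Longrightarrow}$ as usual. $m$ rejects (accepts) $s\in\mathrm{Act}^*$ if $m\overset{s}{\Longrightarrow}\mathrm{no}$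 ($\mathrm{yes}$), and rejects (accepts) $g\in\mathrm{Fin}$ if it rejects (accepts) some finite prefix of $g$. Soundness over finfinite traces: $m$ rejects $g$ implies $g\notin[\![\varphi]\!]_F$, and $m$ accepts $g$ implies $g\in[\![\varphi]\!]_F$, for all $g\in\mathrm{Fin}$; violation-complete: $g\notin[\![\varphi]\!]_F$ implies $m$ rejects $g$; satisfaction-complete: $g\in[\![\varphi]\!]_F$ implies $m$ accepts $g$. Monitor synthesis (writing $A.n$ for $\sum_{a\in A}a.n$, $\overline{A}=\mathrm{Act}\setminus A$, and omitting a summand whose action set is empty): $\mathrm{m}(\mathrm{tt})=\mathrm{yes}$, $\mathrm{m}(\mathrm{ff})=\mathrm{no}$, $\mathrm{m}(X)=x$, $\mathrm{m}(\varphi\wedge\psi)=\mathrm{m}(\varphi)\otimes\mathrm{m}(\psi)$, $\mathrm{m}(\varphi\vee\psi)=\mathrm{m}(\varphi)\oplus\mathrm{m}(\psi)$, $\mathrm{m}([A]\varphi)=A.\mathrm{m}(\varphi)+\overline{A}.\mathrm{yes}$, $\mathrm{m}(\langle A\rangle\varphi)=A.\mathrm{m}(\varphi)+\overline{A}.\mathrm{no}$, $\mathrm{m}(\max X.\varphi)=\mathrm{m}(\min X.\varphi)=\mathrm{rec}\,x.\mathrm{m}(\varphi)$. *)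

(* Defs.v *)
From mathcomp Require Import all_boot.
From Stdlib Require Import Relations.
Set Implicit Arguments. Unset Strict Implicit. Unset Printing Implicit Defensive.

Section Defs.
Variable Act : finType.

Inductive trace : Type :=
| TFin of seq Act
| TInf of (nat -> Act).

Definition tcons (a : Act) (g : trace) : trace :=
  match g with
  | TFin s => TFin (a :: s)
  | TInf f => TInf (fun n => if n is k.+1 then f k else a)
  end.

Definition is_prefix (s : seq Act) (g : trace) : Prop :=
  match g with
  | TFin t => s = take (size s) t
  | TInf f => s = mkseq f (size s)
  end.

Inductive form : Type :=
| FTt | FFf
| FOr of form & form
| FAnd of form & form
| FDia of {set Act} & form
| FBox of {set Act} & form
| FMin of nat & form
| FMax of nat & form
| FVar of nat.

Definition upd (s : nat -> trace -> Prop) (X : nat) (S : trace -> Prop) :=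
  fun Y => if Y == X then S else s Y.

Fixpoint sem (phi : form) (sigma : nat -> trace -> Prop) : trace -> Prop :=
  match phi with
  | FTt => fun _ => True
  | FFf => fun _ => False
  | FOr p q => fun g => sem p sigma g \/ sem q sigma g
  | FAnd p q => fun g => sem p sigma g /\ sem q sigma g
  | FDia A p => fun g => exists a g', a \in A /\ g = tcons a g' /\ sem p sigma g'
  | FBox A p => fun g => forall a g', a \in A -> g = tcons a g' -> sem p sigma g'
  | FMin X p => fun g =>
      forall S : trace -> Prop,
        (forall h, sem p (upd sigma X S) h -> S h) -> S g
  | FMax X p => fun g =>
      exists S : trace -> Prop,
        (forall h, S h -> sem p (upd sigma X S) h) /\ S g
  | FVar X => sigma X
  end.

Definition env0 : nat -> trace -> Prop := fun _ _ => False.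

Definition semF (phi : form) : trace -> Prop := sem phi env0.

Fixpoint closed_in (bound : seq nat) (phi : form) : bool :=
  match phi with
  | FTt | FFf => true
  | FOr p q | FAnd p q => closed_in bound p && closed_in bound q
  | FDia _ p | FBox _ p => closed_in bound p
  | FMin X p | FMax X p => closed_in (X :: bound) p
  | FVar X => X \in bound
  end.
Definition closedF (phi : form) := closed_in [::] phi.

(* guardedness: every occurrence of a bound variable lies under a modality
   within the scope of its binder; [unsafe] = variables bound but not yet
   guarded at the current position *)
Fixpoint guarded_in (unsafe : seq nat) (phi : form) : bool :=
  match phi with
  | FTt | FFf => true
  | FOr p q | FAnd p q => guarded_in unsafe p && guarded_in unsafe q
  | FDia _ p | FBox _ p => guarded_in [::] p
  | FMin X p | FMax X p => guarded_in (X :: unsafe) p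
  | FVar X => X \notin unsafe
  end.
Definition guardedF (phi : form) := guarded_in [::] phi.

Fixpoint sHML (phi : form) : bool :=
  match phi with
  | FTt | FFf | FVar _ => true
  | FOr p q | FAnd p q => sHML p && sHML q
  | FBox _ p | FMax _ p => sHML p
  | FDia _ _ | FMin _ _ => false
  end.
Fixpoint cHML (phi : form) : bool :=
  match phi with
  | FTt | FFf | FVar _ => true
  | FOr p q | FAnd p q => cHML p && cHML q
  | FDia _ p | FMin _ p => cHML p
  | FBox _ _ | FMax _ _ => false
  end.

Inductive verdict : Type := VEnd | VNo | VYes.

Inductive mon : Type :=
| MV of verdict
| MAct of Act & mon
| MSum of mon & mon
| MRec of nat & mon
| MVar of nat
| MAnd of mon & mon
| MOr of mon & mon.

Fixpoint subst (m : mon) (x : nat) (N : mon) : mon :=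
  match m with
  | MV v => MV v
  | MAct a m' => MAct a (subst m' x N)
  | MSum m1 m2 => MSum (subst m1 x N) (subst m2 x N)
  | MRec y m' => if y == x then MRec y m' else MRec y (subst m' x N)
  | MVar y => if y == x then N else MVar y
  | MAnd m1 m2 => MAnd (subst m1 x N) (subst m2 x N)
  | MOr m1 m2 => MOr (subst m1 x N) (subst m2 x N)
  end.

(* labelled transitions; label None = tau, Some a = a *)
Inductive step : mon -> option Act -> mon -> Prop :=
| st_act a m : step (MAct a m) (Some a) m
| st_rec x m : step (MRec x m) None (subst m x (MRec x m))
| st_suml m n mu m' : step m mu m' -> step (MSum m n) mu m'
| st_sumr m n mu m' : step m mu m' -> step (MSum n m) mu m'
| st_verd v a : step (MV v) (Some a) (MV v)
| st_and_act m n a m' n' :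
    step m (Some a) m' -> step n (Some a) n' -> step (MAnd m n) (Some a) (MAnd m' n')
| st_or_act m n a m' n' :
    step m (Some a) m' -> step n (Some a) n' -> step (MOr m n) (Some a) (MOr m' n')
| st_and_taul m n m' : step m None m' -> step (MAnd m n) None (MAnd m' n)
| st_and_taur m n m' : step m None m' -> step (MAnd n m) None (MAnd n m')
| st_or_taul m n m' : step m None m' -> step (MOr m n) None (MOr m' n)
| st_or_taur m n m' : step m None m' -> step (MOr n m) None (MOr n m')
| st_and_end : step (MAnd (MV VEnd) (MV VEnd)) None (MV VEnd)
| st_or_end : step (MOr (MV VEnd) (MV VEnd)) None (MV VEnd)
| st_and_yesl m : step (MAnd (MV VYes) m) None m
| st_and_yesr m : step (MAnd m (MV VYes)) None m
| st_and_nol m : step (MAnd (MV VNo) m) None (MV VNo)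
| st_and_nor m : step (MAnd m (MV VNo)) None (MV VNo)
| st_or_nol m : step (MOr (MV VNo) m) None m
| st_or_nor m : step (MOr m (MV VNo)) None m
| st_or_yesl m : step (MOr (MV VYes) m) None (MV VYes)
| st_or_yesr m : step (MOr m (MV VYes)) None (MV VYes).

Definition taus : relation mon := clos_refl_trans mon (fun m m' => step m None m').

Definition wstep (m : mon) (a : Act) (m' : mon) : Prop :=
  exists m1 m2, taus m m1 /\ step m1 (Some a) m2 /\ taus m2 m'.

Fixpoint wtrace (m : mon) (s : seq Act) (m' : mon) : Prop :=
  match s with
  | [::] => taus m m'
  | a :: s' => exists m1, wstep m a m1 /\ wtrace m1 s' m'
  end.

Definition rejects_fin (m : mon) (s : seq Act) := wtrace m s (MV VNo).
Definition accepts_fin (m : mon) (s : seq Act) := wtrace m s (MV VYes).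
Definition rejects (m : mon) (g : trace) :=
  exists s, is_prefix s g /\ rejects_fin m s.
Definition accepts (m : mon) (g : trace) :=
  exists s, is_prefix s g /\ accepts_fin m s.

Definition sound (m : mon) (phi : form) : Prop :=
  forall g, (rejects m g -> ~ semF phi g) /\ (accepts m g -> semF phi g).
Definition violation_complete (m : mon) (phi : form) : Prop :=
  forall g, ~ semF phi g -> rejects m g.
Definition satisfaction_complete (m : mon) (phi : form) : Prop :=
  forall g, semF phi g -> accepts m g.

(* A.n = sum_{a in A} a.n ; None when A is empty (summand omitted) *)
Definition prefix_sum (A : {set Act}) (n : mon) : option mon :=
  match enum A with
  | [::] => None
  | a :: s => Some (foldl (fun acc b => MSum acc (MAct b n)) (MAct a n) s)
  end.

(* A.n + B.n', omitting empty summands; if both are empty (only possible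
   when Act is empty) we return the inert verdict end *)
Definition osum (o1 o2 : option mon) : mon :=
  match o1, o2 with
  | Some m1, Some m2 => MSum m1 m2
  | Some m1, None => m1
  | None, Some m2 => m2
  | None, None => MV VEnd
  end.

Fixpoint synth (phi : form) : mon :=
  match phi with
  | FTt => MV VYes
  | FFf => MV VNo
  | FVar X => MVar X
  | FAnd p q => MAnd (synth p) (synth q)
  | FOr p q => MOr (synth p) (synth q)
  | FBox A p => osum (prefix_sum A (synth p)) (prefix_sum (~: A) (MV VYes))
  | FDia A p => osum (prefix_sum A (synth p)) (prefix_sum (~: A) (MV VNo))
  | FMax X p => MRec X (synth p)
  | FMin X p => MRec X (synth p)
  end.

End Defs.

(* Main.v *)
Require Import Defs.
From mathcomp Require Import all_boot.
From Stdlib Require Import Relations Classical FunctionalExtensionality.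
Set Implicit Arguments. Unset Strict Implicit. Unset Printing Implicit Defensive.

Arguments MV {Act} _.
Arguments MVar {Act} _.
Arguments FTt {Act}.
Arguments FFf {Act}.
Arguments FVar {Act} _.

Section Proof.
Variable Act : finType.

Definition mupd (r : nat -> mon Act) (X : nat) (M : mon Act) : nat -> mon Act :=
  fun Y => if Y == X then M else r Y.

Fixpoint msubst (m : mon Act) (r : nat -> mon Act) : mon Act :=
  match m with
  | MV v => MV v
  | MAct a m' => MAct a (msubst m' r)
  | MSum m1 m2 => MSum (msubst m1 r) (msubst m2 r)
  | MRec y m' => MRec y (msubst m' (mupd r y (MVar y)))
  | MVar y => r y
  | MAnd m1 m2 => MAnd (msubst m1 r) (msubst m2 r)
  | MOr m1 m2 => MOr (msubst m1 r) (msubst m2 r)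
  end.

Fixpoint mcl (B : seq nat) (m : mon Act) : bool :=
  match m with
  | MV _ => true
  | MAct _ m' => mcl B m'
  | MSum m1 m2 | MAnd m1 m2 | MOr m1 m2 => mcl B m1 && mcl B m2
  | MRec y m' => mcl (y :: B) m'
  | MVar y => y \in B
  end.

Lemma mcl_sub B B' m : mcl B m -> {subset B <= B'} -> mcl B' m.
Proof.
elim: m B B' => [v|a m IH|m1 IH1 m2 IH2|y m IH|y|m1 IH1 m2 IH2|m1 IH1 m2 IH2] B B' /= H S //.
- exact: IH H S.
- by case/andP: H => /IH1 -> // /IH2 ->.
- apply: IH H _ => z; rewrite !inE => /orP [->//|/S ->]; by rewrite orbT.
- exact: S.
- by case/andP: H => /IH1 -> // /IH2 ->.
- by case/andP: H => /IH1 -> // /IH2 ->.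
Qed.

Lemma mcl_subst B m Y N : mcl B m -> Y \notin B -> subst m Y N = m.
Proof.
elim: m B => [v|a m IH|m1 IH1 m2 IH2|y m IH|y|m1 IH1 m2 IH2|m1 IH1 m2 IH2] B /= H nY //.
- by rewrite (IH B).
- by case/andP: H => H1 H2; rewrite (IH1 B) ?(IH2 B).
- case: eqP => // yY; rewrite (IH (y :: B)) // inE negb_or nY andbT.
  by apply/eqP => E; apply: yY.
- by case: eqP => // E; subst; rewrite H in nY.
- by case/andP: H => H1 H2; rewrite (IH1 B) ?(IH2 B).
- by case/andP: H => H1 H2; rewrite (IH1 B) ?(IH2 B).
Qed.

Lemma mcl_msubst B m r : (forall Z, mcl B (r Z)) -> mcl B (msubst m r).
Proof.
elim: m B r => [v|a m IH|m1 IH1 m2 IH2|y m IH|y|m1 IH1 m2 IH2|m1 IH1 m2 IH2] B r /= H //.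
- exact: IH.
- by rewrite IH1 ?IH2.
- apply: IH => Z; rewrite /mupd; case: eqP => [_|_] /=; first by rewrite inE eqxx.
  apply: mcl_sub (H Z) _ => z; rewrite inE => ->; by rewrite orbT.
- by rewrite IH1 ?IH2.
- by rewrite IH1 ?IH2.
Qed.

Lemma msubst_ext m r r' : r =1 r' -> msubst m r = msubst m r'.
Proof.
elim: m r r' => [v|a m IH|m1 IH1 m2 IH2|y m IH|y|m1 IH1 m2 IH2|m1 IH1 m2 IH2] r r' /= E //.
- by rewrite (IH r r').
- by rewrite (IH1 r r') ?(IH2 r r').
- by rewrite (IH _ (mupd r' y (MVar y))) // => z; rewrite /mupd; case: eqP.
- by rewrite (IH1 r r') ?(IH2 r r').
- by rewrite (IH1 r r') ?(IH2 r r').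
Qed.

Lemma subst_msubst m r Y N :
  (forall Z, Z != Y -> subst (r Z) Y N = r Z) ->
  subst (msubst m (mupd r Y (MVar Y))) Y N = msubst m (mupd r Y N).
Proof.
elim: m r => [v|a m IH|m1 IH1 m2 IH2|y m IH|y|m1 IH1 m2 IH2|m1 IH1 m2 IH2] r H /= //.
- by rewrite IH.
- by rewrite IH1 ?IH2.
- case: eqP => [->|yY].
  + congr MRec; apply: msubst_ext => z; rewrite /mupd; by case: eqP.
  + rewrite (@msubst_ext m _ (mupd (mupd r y (MVar y)) Y (MVar Y))); last first.
      move=> z; rewrite /mupd; case: (z =P Y) => [->|_]; case: (_ =P y) => // E.
      by case: yY.
    rewrite IH; last first.
      move=> Z ZY; rewrite /mupd; case: eqP => [_|_]; last exact: H.
      by rewrite /=; case: eqP.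
    congr MRec; apply: msubst_ext => z; rewrite /mupd.
    case: (z =P Y) => [->|_]; case: (_ =P y) => // E.
    by case: yY.
- rewrite /mupd; case: eqP => [_|/eqP yY] /=; first by rewrite eqxx.
  exact: H.
- by rewrite IH1 ?IH2.
- by rewrite IH1 ?IH2.
Qed.


Definition fsum (n : mon Act) := fun acc b => MSum acc (MAct b n).

Lemma omap_ps A n r :
  omap (msubst^~ r) (prefix_sum A n) = prefix_sum A (msubst n r).
Proof.
rewrite /prefix_sum; case: (enum A) => [|a s] //=; congr Some.
have : forall acc, msubst (foldl (fsum n) acc s) r = foldl (fsum (msubst n r)) (msubst acc r) s.
  by elim: s => [|b s IH] acc //=; rewrite IH.
exact.
Qed.

Lemma ms_osum o1 o2 r :
  msubst (osum o1 o2) r = osum (omap (msubst^~ r) o1) (omap (msubst^~ r) o2).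
Proof. by case: o1; case: o2. Qed.

Lemma ms_box A p r : msubst (synth (FBox A p)) r =
  osum (prefix_sum A (msubst (synth p) r)) (prefix_sum (~: A) (MV VYes)).
Proof. by rewrite /= ms_osum !omap_ps. Qed.

Lemma ms_dia A p r : msubst (synth (FDia A p)) r =
  osum (prefix_sum A (msubst (synth p) r)) (prefix_sum (~: A) (MV VNo)).
Proof. by rewrite /= ms_osum !omap_ps. Qed.

Lemma ps_step (A : {set Act}) (n m m' : mon Act) (mu : option Act) :
  prefix_sum A n = Some m -> step m mu m' ->
  exists a, mu = Some a /\ a \in A /\ m' = n.
Proof.
rewrite /prefix_sum; have := mem_enum A; case: (enum A) => [|a0 s] //= Hm [<-].
have H : forall acc, step (foldl (fsum n) acc s) mu m' ->
    step acc mu m' \/ exists2 b, b \in s & mu = Some b /\ m' = n.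
  elim: s {Hm} => [|b s IH] acc /=; first by left.
  move/IH => [H|[c cs E]]; last by right; exists c => //; rewrite inE cs orbT.
  inversion H; subst; first by left.
  inversion H4; subst; right; exists b => //; by rewrite inE eqxx.
move/H => [H1|[b bs [-> ->]]].
  inversion H1; subst; exists a0; split => //; split => //; by rewrite -Hm inE eqxx.
exists b; split => //; split => //; by rewrite -Hm inE bs orbT.
Qed.

Lemma ps_ex (A : {set Act}) (n : mon Act) a :
  a \in A -> exists m, prefix_sum A n = Some m /\ step m (Some a) n.
Proof.
rewrite /prefix_sum -mem_enum; case: (enum A) => [|a0 s] //= Ha.
eexists; split; first reflexivity.
have H : forall acc, step acc (Some a) n \/ a \in s -> step (foldl (fsum n) acc s) (Some a) n.
  elim: s {Ha} => [|b s IH] acc /=; first by case.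
  move=> H; apply: IH; case: H => [H|]; first by left; apply: st_suml.
  rewrite inE => /orP [/eqP ->|]; last by right.
  by left; apply: st_sumr; apply: st_act.
apply: H; move: Ha; rewrite inE => /orP [/eqP ->|]; last by right.
by left; apply: st_act.
Qed.

Definition bmon A (n : mon Act) v := osum (prefix_sum A n) (prefix_sum (~: A) (MV v)).

Lemma bmon_step A n v (mu : option Act) m' : step (bmon A n v) mu m' ->
  exists a, mu = Some a /\ ((a \in A /\ m' = n) \/ (a \notin A /\ m' = MV v)).
Proof.
rewrite /bmon.
case E1: (prefix_sum A n) => [m1|]; case E2: (prefix_sum (~:A) (MV v)) => [m2|] /= H.
- inversion H; subst.
  + have [a [-> [aA ->]]] := ps_step E1 H4; exists a; split => //; by left.
  + have [a [-> [aA ->]]] := ps_step E2 H4; exists a; split => //; right; by rewrite inE in aA.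
- have [a [-> [aA ->]]] := ps_step E1 H; exists a; split => //; by left.
- have [a [-> [aA ->]]] := ps_step E2 H; exists a; split => //; right; by rewrite inE in aA.
- inversion H; subst; exfalso.
  case aA: (a \in A).
  + by have [m [E _]] := ps_ex n aA; rewrite E in E1.
  + have : a \in ~: A by rewrite inE aA.
    by move/(ps_ex (MV v)) => [m [E _]]; rewrite E in E2.
Qed.

Lemma bmon_ex A n v a :
  step (bmon A n v) (Some a) (if a \in A then n else MV v).
Proof.
rewrite /bmon; case aA: (a \in A).
- have [m [E S]] := ps_ex n aA; rewrite E.
  by case: (prefix_sum (~: A) (MV v)) => [m2|] //=; apply: st_suml.
- have : a \in ~: A by rewrite inE aA.
  move/(ps_ex (MV v)) => [m [E S]]; rewrite E.
  by case: (prefix_sum A n) => [m2|] //=; apply: st_sumr.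
Qed.

Lemma ps_notMV (A : {set Act}) (n m : mon Act) w : prefix_sum A n = Some m -> m <> MV w.
Proof.
rewrite /prefix_sum; case: (enum A) => [|a0 s] //= [<-].
have : forall acc, acc <> MV w -> foldl (fsum n) acc s <> MV w.
  by elim: s => [|b s IH] acc //= _; apply: IH.
by apply.
Qed.

Lemma bmon_MV A n v w : bmon A n v = MV w -> (Act -> False) /\ w = VEnd.
Proof.
rewrite /bmon.
case E1: (prefix_sum A n) => [m1|]; case E2: (prefix_sum (~:A) (MV v)) => [m2|] /=.
- by [].
- by move/(ps_notMV E1).
- by move/(ps_notMV E2).
- case => <-; split => // a.
  case aA: (a \in A).
  + by have [m [E _]] := ps_ex n aA; rewrite E in E1.
  + have : a \in ~: A by rewrite inE aA.
    by move/(ps_ex (MV v)) => [m [E _]]; rewrite E in E2.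
Qed.

Lemma synth_closed B (p : form Act) r : closed_in B p ->
  (forall Z, Z \in B -> r Z = MVar Z) -> msubst (synth p) r = synth p.
Proof.
elim: p B r => [|| p IHp q IHq | p IHp q IHq | A p IHp | A p IHp | Y p IHp | Y p IHp | Y] B r /= Hc Hr //.
- by case/andP: Hc => /IHp -> // /IHq ->.
- by case/andP: Hc => /IHp -> // /IHq ->.
- by rewrite ms_osum !omap_ps (IHp B).
- by rewrite ms_osum !omap_ps (IHp B).
- rewrite (IHp (Y :: B)) // => Z; rewrite inE /mupd; case: eqP => [->//|_] /=; exact: Hr.
- rewrite (IHp (Y :: B)) // => Z; rewrite inE /mupd; case: eqP => [->//|_] /=; exact: Hr.
- exact: Hr.
Qed.


Definition sle (s s' : nat -> trace Act -> Prop) := forall Z h, s Z h -> s' Z h.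

Lemma upd_mono (s s' : nat -> trace Act -> Prop) X (S S' : trace Act -> Prop) :
  sle s s' -> (forall h, S h -> S' h) -> sle (upd s X S) (upd s' X S').
Proof. move=> H1 H2 Z h; rewrite /upd; case: eqP => _; [exact: H2|exact: H1]. Qed.

Lemma sem_mono (p : form Act) s s' : sle s s' -> forall g, sem p s g -> sem p s' g.
Proof.
elim: p s s' => [|| p IHp q IHq | p IHp q IHq | A p IHp | A p IHp | Y p IHp | Y p IHp | Y] s s' /= H g //.
- by case=> [/(IHp _ _ H)|/(IHq _ _ H)]; [left|right].
- by case=> /(IHp _ _ H) ? /(IHq _ _ H).
- move=> [a [g' [aA [E Hp]]]]; exists a, g'; do 2 split => //; exact: IHp H _ Hp.
- move=> Hb a g' aA E; exact: IHp H _ (Hb a g' aA E).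
- move=> Hm S HS; apply: Hm => h Hh; apply: HS; apply: IHp Hh.
  exact: upd_mono.
- move=> [S [HS Sg]]; exists S; split => // h /HS; apply: IHp; exact: upd_mono.
- exact: H.
Qed.

Lemma lfp_unfold Y (p : form Act) s g :
  sem p (upd s Y (sem (FMin Y p) s)) g <-> sem (FMin Y p) s g.
Proof.
have F1 : forall g, sem p (upd s Y (sem (FMin Y p) s)) g -> sem (FMin Y p) s g.
  move=> h Hh S HS; apply HS; apply: sem_mono Hh; apply: upd_mono => // k Hk.
  exact: Hk S HS.
split; first exact: F1.
move=> Hg; apply: Hg => h Hh; apply: sem_mono Hh; apply: upd_mono => // k; exact: F1.
Qed.

Lemma gfp_unfold Y (p : form Act) s g :
  sem p (upd s Y (sem (FMax Y p) s)) g <-> sem (FMax Y p) s g.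
Proof.
have F1 : forall g, sem (FMax Y p) s g -> sem p (upd s Y (sem (FMax Y p) s)) g.
  move=> h [S [HS Sh]]; apply: sem_mono (HS _ Sh); apply: upd_mono => // k Sk.
  by exists S.
split; last exact: F1.
move=> Hg; exists (sem p (upd s Y (sem (FMax Y p) s))); split => // h Hh.
apply: sem_mono Hh; apply: upd_mono => // k; exact: F1.
Qed.

Lemma tcons_inj (a b : Act) g g' : tcons a g = tcons b g' -> a = b /\ g = g'.
Proof.
case: g => [s|f]; case: g' => [s'|f'] //= [].
- by move=> -> ->.
- move=> E; split; first by have := f_equal (fun F => F 0) E.
  congr TInf; apply: functional_extensionality => k.
  by have := f_equal (fun F => F k.+1) E.
Qed.


Inductive Cor : mon Act -> (trace Act -> Prop) -> Prop :=
| CorYes : Cor (MV VYes) (fun _ => True)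
| CorNo : Cor (MV VNo) (fun _ => False)
| CorEnd P : (Act -> False) -> Cor (MV VEnd) P
| CorAnd m1 m2 P1 P2 : Cor m1 P1 -> Cor m2 P2 -> Cor (MAnd m1 m2) (fun g => P1 g /\ P2 g)
| CorOr m1 m2 P1 P2 : Cor m1 P1 -> Cor m2 P2 -> Cor (MOr m1 m2) (fun g => P1 g \/ P2 g)
| CorExt m P Q : Cor m P -> (forall g, P g <-> Q g) -> Cor m Q
| CorSyn p r s : (forall Z, mcl [::] (r Z)) -> (forall Z, Cor (r Z) (s Z)) ->
    Cor (msubst (synth p) r) (sem p s).

Definition Props (m : mon Act) (P : trace Act -> Prop) :=
  [/\ forall m', step m None m' -> Cor m' P,
      forall a m', step m (Some a) m' -> Cor m' (fun g => P (tcons a g)),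
      m = MV VYes -> forall g, P g,
      m = MV VNo -> forall g, ~ P g &
      m = MV VEnd -> Act -> False].

Lemma props_ext m P Q : Props m P -> (forall g, P g <-> Q g) -> Props m Q.
Proof.
move=> [T A Y N E] H; split => //.
- move=> m' /T C; exact: CorExt C H.
- move=> a m' /A C; apply: CorExt C _ => g; exact: H.
- by move=> /Y HY g; apply/(H g).
- by move=> /N HN g Qg; apply: (HN g); apply/(H g).
Qed.

Lemma props_yes : Props (MV VYes) (fun _ => True).
Proof.
split => //.
- by move=> m' H; inversion H.
- by move=> a m' H; inversion H; subst; apply: CorYes.
Qed.

Lemma props_no : Props (MV VNo) (fun _ => False).
Proof.
split => //.
- by move=> m' H; inversion H.
- by move=> a m' H; inversion H; subst; apply: CorNo.
- by move=> _ g.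
Qed.

Lemma and_props m1 m2 P1 P2 : Cor m1 P1 -> Props m1 P1 -> Cor m2 P2 -> Props m2 P2 ->
  Props (MAnd m1 m2) (fun g => P1 g /\ P2 g).
Proof.
move=> C1 [T1 A1 Y1 N1 E1] C2 [T2 A2 Y2 N2 E2]; split => //.
- move=> m' H; inversion H; subst.
  + by apply: CorAnd => //; apply: T1.
  + by apply: CorAnd => //; apply: T2.
  + by apply: CorEnd; apply: E1.
  + by apply: CorExt C2 _ => g; split => [?|[]//]; split => //; apply: Y1.
  + by apply: CorExt C1 _ => g; split => [?|[]//]; split => //; apply: Y2.
  + by apply: CorExt CorNo _ => g; split => // [[/(N1 erefl g)]].
  + by apply: CorExt CorNo _ => g; split => // [[_ /(N2 erefl g)]].
- move=> a m' H; inversion H; subst; apply: CorAnd; [exact: A1|exact: A2].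
Qed.

Lemma or_props m1 m2 P1 P2 : Cor m1 P1 -> Props m1 P1 -> Cor m2 P2 -> Props m2 P2 ->
  Props (MOr m1 m2) (fun g => P1 g \/ P2 g).
Proof.
move=> C1 [T1 A1 Y1 N1 E1] C2 [T2 A2 Y2 N2 E2]; split => //.
- move=> m' H; inversion H; subst.
  + by apply: CorOr => //; apply: T1.
  + by apply: CorOr => //; apply: T2.
  + by apply: CorEnd; apply: E1.
  + by apply: CorExt C2 _ => g; split => [?|[/(N1 erefl g)|]//]; right.
  + by apply: CorExt C1 _ => g; split => [?|[|/(N2 erefl g)]//]; left.
  + by apply: CorExt CorYes _ => g; split => // _; left; apply: Y1.
  + by apply: CorExt CorYes _ => g; split => // _; right; apply: Y2.
- move=> a m' H; inversion H; subst; apply: CorOr; [exact: A1|exact: A2].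
Qed.


Lemma bmon_props (A : {set Act}) n v (P : trace Act -> Prop) (Q : trace Act -> Prop) :
  Cor n P ->
  (forall a, a \in A -> forall g, P g <-> Q (tcons a g)) ->
  (forall a, a \notin A -> forall g, (if v is VNo then False else True) <-> Q (tcons a g)) ->
  v <> VEnd ->
  Props (bmon A n v) Q.
Proof.
move=> Cn HA HnA vE; split.
- by move=> m' /bmon_step [a [E _]].
- move=> a m' /bmon_step [b [[<-]] [[aA ->]|[aA ->]]].
    by apply: CorExt Cn _ => g; apply: HA.
  case: v HnA vE => // HnA _.
  + by apply: CorExt CorNo _ => g; apply: HnA.
  + by apply: CorExt CorYes _ => g; apply: HnA.
- by move/bmon_MV => [_ E].
- by move/bmon_MV => [_ E].
- by move/bmon_MV => [].
Qed.

Lemma syn_props (p : form Act) r s :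
  (forall Z, mcl [::] (r Z)) -> (forall Z, Cor (r Z) (s Z)) -> (forall Z, Props (r Z) (s Z)) ->
  Props (msubst (synth p) r) (sem p s).
Proof.
elim: p r s => [|| p IHp q IHq | p IHp q IHq | A p IHp | A p IHp | Y p IHp | Y p IHp | Y] r s Hc HC HP.
- exact: props_yes.
- exact: props_no.
- by apply: or_props; [apply: CorSyn|apply: IHp|apply: CorSyn|apply: IHq].
- by apply: and_props; [apply: CorSyn|apply: IHp|apply: CorSyn|apply: IHq].
- rewrite ms_dia; apply: bmon_props => //; first exact: CorSyn.
  + move=> a aA g; split => [Hp|[b [g' [bA [/tcons_inj [_ ->] Hp]]]] //].
    by exists a, g.
  + move=> a aA g; split => // [[b [g' [bA [/tcons_inj [E _] _]]]]].
    by rewrite E bA in aA.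
- rewrite ms_box; apply: bmon_props => //; first exact: CorSyn.
  + move=> a aA g; split => [Hp b g' bA /tcons_inj [_ <-] //|H].
    exact: H a g aA erefl.
  + move=> a aA g; split => // _ b g' bA /tcons_inj [E _].
    by rewrite E bA in aA.
- set R := msubst (synth (FMin Y p)) r.
  have HR : mcl [::] R by apply: mcl_msubst.
  have CR : Cor R (sem (FMin Y p) s) by apply: CorSyn.
  split => //=.
  + move=> m' H; inversion H; subst.
    rewrite subst_msubst; last by move=> Z _; exact: mcl_subst (Hc Z) _.
    apply: CorExt (lfp_unfold Y p s).
    apply: CorSyn => Z; rewrite /mupd /upd; case: eqP => _ //.
  + by move=> a m' H; inversion H.
- set R := msubst (synth (FMax Y p)) r.
  have HR : mcl [::] R by apply: mcl_msubst.
  have CR : Cor R (sem (FMax Y p) s) by apply: CorSyn.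
  split => //=.
  + move=> m' H; inversion H; subst.
    rewrite subst_msubst; last by move=> Z _; exact: mcl_subst (Hc Z) _.
    apply: CorExt (gfp_unfold Y p s).
    apply: CorSyn => Z; rewrite /mupd /upd; case: eqP => _ //.
  + by move=> a m' H; inversion H.
- exact: HP.
Qed.

Lemma cor_props m P : Cor m P -> Props m P.
Proof.
elim => {m P}.
- exact: props_yes.
- exact: props_no.
- move=> P nA; split => //.
  + by move=> m' H; inversion H.
- by move=> *; apply: and_props.
- by move=> *; apply: or_props.
- by move=> m P Q _ H E; apply: props_ext H E.
- move=> p r s Hc HC HP; exact: syn_props.
Qed.


Definition tapp (s : seq Act) (g : trace Act) := foldr (@tcons Act) g s.

Lemma tapp_fin s t : tapp s (TFin t) = TFin (s ++ t).
Proof. by elim: s => [|a s IH] //=; rewrite IH. Qed.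

Lemma mkseq_cons T (f : nat -> T) n : mkseq f n.+1 = f 0 :: mkseq (fun i => f i.+1) n.
Proof. rewrite /mkseq /=; have := iotaDl 1 0 n; rewrite addn0 => ->; by rewrite -map_comp. Qed.

Lemma prefix_nil (g : trace Act) : is_prefix [::] g.
Proof. by case: g => [t|f] //=; rewrite take0. Qed.

Lemma prefix_cons a s (g : trace Act) : is_prefix s g -> is_prefix (a :: s) (tcons a g).
Proof.
case: g => [t|f] /= E; first by rewrite {1}E.
by rewrite mkseq_cons /= -E.
Qed.

Lemma prefix_tapp s h : is_prefix s (tapp s h).
Proof. elim: s => [|a s IH] /=; [exact: prefix_nil|exact: prefix_cons]. Qed.

Lemma prefix_ex s (g : trace Act) : is_prefix s g -> exists h, g = tapp s h.
Proof.
case: g => [t|f] /= E.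
  exists (TFin (drop (size s) t)); by rewrite tapp_fin {1}E cat_take_drop.
exists (TInf (fun k => f (k + size s))).
elim: s f E => [|a s IH] f /= E.
  by congr TInf; apply: functional_extensionality => k; rewrite addn0.
move: E; rewrite mkseq_cons => [[Ea Es]].
have -> : (fun k => f (k + (size s).+1)) = (fun k => (fun i => f i.+1) (k + size s)).
  by apply: functional_extensionality => k; rewrite addnS.
rewrite -(IH (fun i => f i.+1)) //= Ea.
congr TInf; apply: functional_extensionality => -[|k] //=.
Qed.

Lemma tapp_prefix2 s1 s2 h1 h2 : tapp s1 h1 = tapp s2 h2 -> size s1 <= size s2 ->
  exists t, s2 = s1 ++ t.
Proof.
elim: s1 s2 => [|a s1 IH] s2; first by exists s2.
case: s2 => [|b s2] //= /tcons_inj [<- E] Hs.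
by have [t ->] := IH s2 E Hs; exists t.
Qed.

Lemma taus_wtrace (m m1 m2 : mon Act) s : taus m m1 -> wtrace m1 s m2 -> wtrace m s m2.
Proof.
case: s => [|a s] /= H.
  by move=> H2; apply: rt_trans H H2.
move=> [x [[y1 [y2 [T1 [S T2]]]] W]]; exists x; split => //.
exists y1, y2; split => //; exact: rt_trans H T1.
Qed.

Lemma wtrace_cat (m m1 m2 : mon Act) s t : wtrace m s m1 -> wtrace m1 t m2 -> wtrace m (s ++ t) m2.
Proof.
elim: s m => [|a s IH] m /=; first exact: taus_wtrace.
by move=> [x [Wx W]] W2; exists x; split => //; apply: IH W W2.
Qed.

Lemma verd_wtrace v s : wtrace (MV v : mon Act) s (MV v).
Proof.
elim: s => [|a s IH] /=; first exact: rt_refl.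
exists (MV v); split => //; exists (MV v), (MV v); split; first exact: rt_refl.
split; [exact: st_verd|exact: rt_refl].
Qed.

Lemma wtrace_ext (m : mon Act) s t v : wtrace m s (MV v) -> wtrace m (s ++ t) (MV v).
Proof. move=> W; apply: wtrace_cat W (verd_wtrace v t). Qed.

Section Par.
Variable op : mon Act -> mon Act -> mon Act.
Hypothesis opl : forall m m' n, step m None m' -> step (op m n) None (op m' n).
Hypothesis opr : forall m n n', step n None n' -> step (op m n) None (op m n').
Hypothesis opa : forall m m' n n' a, step m (Some a) m' -> step n (Some a) n' ->
  step (op m n) (Some a) (op m' n').

Lemma taus_par m m' n n' : taus m m' -> taus n n' -> taus (op m n) (op m' n').
Proof.
move=> H1 H2; apply: (@rt_trans _ _ _ (op m' n)).
  elim: H1 => {m m'} [m m' S|m|m1 m2 m3 _ IH1 _ IH2].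
  - by apply: rt_step; apply: opl.
  - exact: rt_refl.
  - exact: rt_trans IH1 IH2.
elim: H2 => {n n'} [n n' S|n|m1 m2 m3 _ IH1 _ IH2].
- by apply: rt_step; apply: opr.
- exact: rt_refl.
- exact: rt_trans IH1 IH2.
Qed.

Lemma wtrace_par s m1 m1' m2 m2' : wtrace m1 s m1' -> wtrace m2 s m2' ->
  wtrace (op m1 m2) s (op m1' m2').
Proof.
elim: s m1 m2 => [|a s IH] m1 m2 /=; first exact: taus_par.
move=> [x1 [[y1 [z1 [T1 [S1 U1]]]] W1]] [x2 [[y2 [z2 [T2 [S2 U2]]]] W2]].
exists (op x1 x2); split; last exact: IH.
exists (op y1 y2), (op z1 z2); split; first exact: taus_par.
split; [exact: opa|exact: taus_par].
Qed.
End Par.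

Lemma wtrace_and s (m1 m1' m2 m2' : mon Act) : wtrace m1 s m1' -> wtrace m2 s m2' ->
  wtrace (MAnd m1 m2) s (MAnd m1' m2').
Proof.
apply: wtrace_par => *; [exact: st_and_taul|exact: st_and_taur|exact: st_and_act].
Qed.

Lemma wtrace_or s (m1 m1' m2 m2' : mon Act) : wtrace m1 s m1' -> wtrace m2 s m2' ->
  wtrace (MOr m1 m2) s (MOr m1' m2').
Proof.
apply: wtrace_par => *; [exact: st_or_taul|exact: st_or_taur|exact: st_or_act].
Qed.

Lemma cor_taus m m' P : Cor m P -> taus m m' -> Cor m' P.
Proof.
move=> C H; elim: H P C => {m m'} [u u' S|u|u1 u2 u3 _ IH1 _ IH2] P C //.
- by have [T _ _ _ _] := cor_props C; apply: T.
- by apply: IH2; apply: IH1.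
Qed.

Lemma cor_wtrace m P s m' : Cor m P -> wtrace m s m' -> Cor m' (fun g => P (tapp s g)).
Proof.
elim: s m P => [|a s IH] m P /= C; first exact: cor_taus.
move=> [x [[y1 [y2 [T1 [S1 U1]]]] W]].
apply: (IH x (fun g => P (tcons a g))) => //.
apply: cor_taus U1; have [_ A _ _ _] := cor_props (cor_taus C T1); exact: A.
Qed.

Lemma cor_top (phi : form Act) : closedF phi -> Cor (synth phi) (semF phi).
Proof.
move=> Hc; rewrite -(@synth_closed [::] phi (fun _ => MV VNo)) //.
by apply: CorSyn => Z //; apply: CorNo.
Qed.

Lemma soundness (phi : form Act) : closedF phi -> sound (synth phi) phi.
Proof.
move=> /cor_top C g; split.
- move=> [s [Hs W]]; have [h ->] := prefix_ex Hs.
  have [_ _ _ N _] := cor_props (cor_wtrace C W); exact: N erefl h.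
- move=> [s [Hs W]]; have [h ->] := prefix_ex Hs.
  have [_ _ Y _ _] := cor_props (cor_wtrace C W); exact: Y erefl h.
Qed.


Definition tot n (m : mon Act) := forall s : seq Act, size s <= n -> exists m', wtrace m s m'.

Lemma tot_le n k m : tot n m -> k <= n -> tot k m.
Proof. by move=> H kn s Hs; apply: H; apply: leq_trans Hs kn. Qed.

Lemma tot_verd n v : tot n (MV v).
Proof. by move=> s _; exists (MV v); apply: verd_wtrace. Qed.

Lemma tot_tau n m m' : step m None m' -> tot n m' -> tot n m.
Proof.
move=> S H s Hs; have [x W] := H s Hs; exists x.
by apply: taus_wtrace W; apply: rt_step.
Qed.

Lemma rec_step Y (p : form Act) r : (forall Z, mcl [::] (r Z)) ->
  step (msubst (synth (FMin Y p)) r) None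
       (msubst (synth p) (mupd r Y (msubst (synth (FMin Y p)) r))).
Proof.
move=> Hc; rewrite -subst_msubst; first exact: st_rec.
by move=> Z _; exact: mcl_subst (Hc Z) _.
Qed.

Lemma rec_step' Y (p : form Act) r : (forall Z, mcl [::] (r Z)) ->
  step (msubst (synth (FMax Y p)) r) None
       (msubst (synth p) (mupd r Y (msubst (synth (FMax Y p)) r))).
Proof. exact: rec_step. Qed.

Lemma tot_bmon n A m v : tot n m -> tot n.+1 (bmon A m v).
Proof.
move=> H [|a s] Hs; first by exists (bmon A m v); apply: rt_refl.
have St := bmon_ex A m v a.
have [x W] : exists x, wtrace (if a \in A then m else MV v) s x.
  by case: (a \in A); [apply: H|apply: tot_verd].
exists x; exists (if a \in A then m else MV v); split => //.
exists (bmon A m v), (if a \in A then m else MV v); split; first exact: rt_refl.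
by split => //; apply: rt_refl.
Qed.

Lemma prog n (p : form Act) U r : guarded_in U p -> (forall Z, mcl [::] (r Z)) ->
  (forall Z, Z \in U -> tot n.-1 (r Z)) -> (forall Z, Z \notin U -> tot n (r Z)) ->
  tot n (msubst (synth p) r).
Proof.
elim: n p U r => [|n IHn] p U r.
  move=> _ _ _ _ [|a s] // _; exists (msubst (synth p) r); exact: rt_refl.
elim: p U r => [|| p IHp q IHq | p IHp q IHq | A p IHp | A p IHp | Y p IHp | Y p IHp | Y] U r /= gU Hc HU HnU.
- exact: tot_verd.
- exact: tot_verd.
- case/andP: gU => g1 g2 s Hs.
  have [x1 W1] := IHp U r g1 Hc HU HnU s Hs.
  have [x2 W2] := IHq U r g2 Hc HU HnU s Hs.
  exists (MOr x1 x2); exact: wtrace_or.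
- case/andP: gU => g1 g2 s Hs.
  have [x1 W1] := IHp U r g1 Hc HU HnU s Hs.
  have [x2 W2] := IHq U r g2 Hc HU HnU s Hs.
  exists (MAnd x1 x2); exact: wtrace_and.
- rewrite -/(synth (FDia A p)) ms_dia; change (tot n.+1 (bmon A (msubst (synth p) r) VNo)); apply: tot_bmon.
  apply: (IHn p [::] r gU Hc) => // Z _.
  by case: (boolP (Z \in U)) => [/HU|/HnU /tot_le]; last apply.
- rewrite -/(synth (FBox A p)) ms_box; change (tot n.+1 (bmon A (msubst (synth p) r) VYes)); apply: tot_bmon.
  apply: (IHn p [::] r gU Hc) => // Z _.
  by case: (boolP (Z \in U)) => [/HU|/HnU /tot_le]; last apply.
- set R := msubst (synth (FMin Y p)) r.
  have TR : tot n R.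
    apply: (IHn (FMin Y p) U r gU Hc).
    + move=> Z /HU /tot_le; apply; exact: leq_pred.
    + by move=> Z /HnU /tot_le; apply.
  apply: tot_tau (rec_step Y p Hc) _.
  apply: (IHp (Y :: U)) => //.
  + move=> Z; rewrite /mupd; case: eqP => _ //; exact: mcl_msubst Hc.
  + move=> Z; rewrite inE /mupd; case: eqP => [_ _|_ /= /HU] //.
  + move=> Z; rewrite inE /mupd; case: eqP => // _ /= /HnU //.
- set R := msubst (synth (FMax Y p)) r.
  have TR : tot n R.
    apply: (IHn (FMax Y p) U r gU Hc).
    + move=> Z /HU /tot_le; apply; exact: leq_pred.
    + by move=> Z /HnU /tot_le; apply.
  apply: tot_tau (rec_step' Y p Hc) _.
  apply: (IHp (Y :: U)) => //.
  + move=> Z; rewrite /mupd; case: eqP => _ //; exact: mcl_msubst Hc.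
  + move=> Z; rewrite inE /mupd; case: eqP => [_ _|_ /= /HU] //.
  + move=> Z; rewrite inE /mupd; case: eqP => // _ /= /HnU //.
- exact: HnU.
Qed.

Lemma total (p : form Act) U r : guarded_in U p -> (forall Z, mcl [::] (r Z)) ->
  (forall Z n, tot n (r Z)) -> forall n, tot n (msubst (synth p) r).
Proof. by move=> gU Hc Ht n; apply: (prog gU Hc) => Z _; apply: Ht. Qed.


Definition reach (m : mon Act) v (g : trace Act) := exists s, is_prefix s g /\ wtrace m s (MV v).

Lemma reach_nil v g : reach (MV v) v g.
Proof. exists [::]; split; [exact: prefix_nil|exact: rt_refl]. Qed.

Lemma reach_tau m m' v g : step m None m' -> reach m' v g -> reach m v g.
Proof.
move=> S [s [P W]]; exists s; split => //; apply: taus_wtrace W; exact: rt_step.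
Qed.

Lemma reach_act m m' a v g : step m (Some a) m' -> reach m' v g -> reach m v (tcons a g).
Proof.
move=> S [s [P W]]; exists (a :: s); split; first exact: prefix_cons.
exists m'; split => //; exists m, m'; split; first exact: rt_refl.
by split => //; exact: rt_refl.
Qed.

Lemma wtrace_tau_end (m : mon Act) s m1 m2 : wtrace m s m1 -> step m1 None m2 -> wtrace m s m2.
Proof.
move=> W S; rewrite -(cats0 s); apply: wtrace_cat W _; exact: rt_step.
Qed.

Section Reach.
Variable op : mon Act -> mon Act -> mon Act.
Hypothesis Hpar : forall (s : seq Act) (m1 m1' m2 m2' : mon Act), wtrace m1 s m1' -> wtrace m2 s m2' ->
  wtrace (op m1 m2) s (op m1' m2').

Lemma reach_two v m1 m2 g : step (op (MV v) (MV v)) None (MV v) ->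
  reach m1 v g -> reach m2 v g -> reach (op m1 m2) v g.
Proof.
move=> S [s1 [P1 W1]] [s2 [P2 W2]].
have [h1 E1] := prefix_ex P1; have [h2 E2] := prefix_ex P2.
case: (leqP (size s1) (size s2)) => Hs.
- have [t Et] := tapp_prefix2 (etrans (esym E1) E2) Hs.
  exists s2; split => //; apply: wtrace_tau_end S; apply: Hpar => //.
  by rewrite Et; apply: wtrace_ext.
- have [t Et] := tapp_prefix2 (etrans (esym E2) E1) (ltnW Hs).
  exists s1; split => //; apply: wtrace_tau_end S; apply: Hpar => //.
  by rewrite Et; apply: wtrace_ext.
Qed.

Lemma reach_one v m1 m2 g : (forall n, step (op (MV v) n) None (MV v)) ->
  (forall n, tot n m2) -> reach m1 v g -> reach (op m1 m2) v g.
Proof.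
move=> S T [s [P W]]; have [x Wx] := T (size s) s (leqnn _).
exists s; split => //; apply: wtrace_tau_end (S x); exact: Hpar.
Qed.
End Reach.

Lemma viol (p : form Act) U r s : sHML p -> guarded_in U p ->
  (forall Z, mcl [::] (r Z)) -> (forall Z n, tot n (r Z)) ->
  (forall Z g, ~ reach (r Z) VNo g -> s Z g) ->
  forall g, ~ reach (msubst (synth p) r) VNo g -> sem p s g.
Proof.
elim: p U r s => [|| p IHp q IHq | p IHp q IHq | A p IHp | A p IHp | Y p IHp | Y p IHp | Y] U r s /= sH gU Hc Ht Hs g H //.
- by apply: H; apply: reach_nil.
- case/andP: sH => s1 s2; case/andP: gU => g1 g2.
  case: (classic (reach (msubst (synth p) r) VNo g)) => R1; last by left; apply: (IHp U).
  case: (classic (reach (msubst (synth q) r) VNo g)) => R2; last by right; apply: (IHq U).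
  by exfalso; apply: H; apply: (reach_two (@wtrace_or)) => //; apply: st_or_nol.
- case/andP: sH => s1 s2; case/andP: gU => g1 g2; split.
  + apply: (IHp U) => // R1; apply: H; apply: (reach_one (@wtrace_and)) => //.
      by move=> n; apply: st_and_nol.
    exact: (total g2).
  + apply: (IHq U) => // R2; apply: H.
    apply: (@reach_one (fun a b => MAnd b a)) => //.
    * by move=> *; apply: wtrace_and.
    * by move=> n; apply: st_and_nor.
    * exact: (total g1).
- move=> a g' aA E; subst g; apply: (IHp [::]) => // R; apply: H.
  rewrite -/(synth (FBox A p)) ms_box.
  apply: (reach_act (bmon_ex A (msubst (synth p) r) VYes a)); by rewrite aA.
- set R := msubst (synth (FMax Y p)) r.
  exists (fun h => ~ reach R VNo h); split => // h Hh.
  apply: (IHp (Y :: U) (mupd r Y R)) => //.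
  + move=> Z; rewrite /mupd; case: eqP => _ //; exact: mcl_msubst Hc.
  + move=> Z n; rewrite /mupd; case: eqP => _ //; exact: (@total (FMax Y p) U r gU Hc Ht).
  + by move=> Z k; rewrite /mupd /upd; case: eqP => _ //; apply: Hs.
  + move=> Hr; apply: Hh; exact: reach_tau (rec_step' Y p Hc) Hr.
- exact: Hs.
Qed.

Lemma satc (p : form Act) U r s : cHML p -> guarded_in U p ->
  (forall Z, mcl [::] (r Z)) -> (forall Z n, tot n (r Z)) ->
  (forall Z g, s Z g -> reach (r Z) VYes g) ->
  forall g, sem p s g -> reach (msubst (synth p) r) VYes g.
Proof.
elim: p U r s => [|| p IHp q IHq | p IHp q IHq | A p IHp | A p IHp | Y p IHp | Y p IHp | Y] U r s /= sH gU Hc Ht Hs g H //.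
- exact: reach_nil.
- case/andP: sH => s1 s2; case/andP: gU => g1 g2.
  case: H => H.
  + apply: (reach_one (@wtrace_or)) => //; last exact: (IHp U _ s).
      by move=> n; apply: st_or_yesl.
    exact: (total g2).
  + apply: (@reach_one (fun a b => MOr b a)) => //; last exact: (IHq U _ s).
    * by move=> *; apply: wtrace_or.
    * by move=> n; apply: st_or_yesr.
    * exact: (total g1).
- case/andP: sH => s1 s2; case/andP: gU => g1 g2; case: H => H1 H2.
  apply: (reach_two (@wtrace_and)); first exact: st_and_yesl.
  + exact: (IHp U _ s).
  + exact: (IHq U _ s).
- case: H => [a [g' [aA [-> Hp]]]].
  rewrite -/(synth (FDia A p)) ms_dia.
  apply: (reach_act (bmon_ex A (msubst (synth p) r) VNo a)); rewrite aA.
  exact: (IHp [::] _ s).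
- set R := msubst (synth (FMin Y p)) r.
  apply: (H (fun h => reach R VYes h)) => h Hh.
  apply: reach_tau (rec_step Y p Hc) _.
  apply: (IHp (Y :: U) (mupd r Y R) _ sH gU) Hh.
  + move=> Z; rewrite /mupd; case: eqP => _ //; exact: mcl_msubst Hc.
  + move=> Z n; rewrite /mupd; case: eqP => _ //; exact: (@total (FMax Y p) U r gU Hc Ht).
  + by move=> Z k; rewrite /mupd /upd; case: eqP => _ //; apply: Hs.
- exact: Hs.
Qed.

End Proof.

Theorem mainTheorem10 (Act : finType) (phi : form Act) :
  closedF phi -> guardedF phi ->
  (sHML phi -> sound (synth phi) phi /\ violation_complete (synth phi) phi) /\
  (cHML phi -> sound (synth phi) phi /\ satisfaction_complete (synth phi) phi).
Proof.
move=> Hc Hg.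
have E : msubst (synth phi) (fun _ => MV VNo) = synth phi.
  by apply: (@synth_closed _ [::]).
split => H; split; try exact: soundness.
- move=> g Hn; apply: NNPP => Hr; apply: Hn.
  apply: (@viol _ phi [::] (fun _ => MV VNo) (@env0 Act)) => //.
  + by move=> Z n; apply: tot_verd.
  + by move=> Z h []; apply: reach_nil.
  + by rewrite E.
- move=> g Hs; rewrite -E.
  apply: (@satc _ phi [::] (fun _ => MV VNo) (@env0 Act)) => //.
  by move=> Z n; apply: tot_verd.
Qed.
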